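(* Let $\lambda\in X^+$ be a $p$-core. Let $\alpha=\varepsilon_i-\varepsilon_j$ with $1\le i<j\le m$, and suppose $\langle\lambda+\rho,\alpha^\vee\rangle=a+lp$ with integers $a,l>0$. Then $\chi(s_{\alpha,l}\cdot\lambda)=0$.
   Context: Setup: $p>2$ is a prime, $m\ge1$, weight lattice $X=\mathbb Z^m$ of $\mathrm{Sp}_{2m}$ with standard basis $\varepsilon_i$, standard inner product, $\alpha^\vee=2\alpha/\langle\alpha,\alpha\rangle$. $X^+=\{\lambda\in\mathbb Z^m:\lambda_1\ge\dots\ge\lambda_m\ge0\}$. $\rho=(m,m-1,\dots,1)$. $s_{\alpha,l}(x)=x-(\langle x,\alpha^\vee\rangle-lp)\alpha$, $w\cdot x=w(x+\rho)-\rho$. For $\mu\in X$, $\chi(\mu)$ is the Weyl character of type $C_m$; $\chi(\mu)=0$ iff some entry of $\mu+\rho$ is $0$ or two entries of $\mu+\rho$ are equal up to sign. A $p$-core is $\lambda\in X^+$ such that for all $i$ and all integers $l\ge1$ with $(\lambda+\rho)_i-lp>0$, the number $(\lambda+\rho)_i-lp$ occurs as an entry of $\lambda+\rho$. *)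

(* Defs.v *)
From mathcomp Require Import all_boot all_order all_algebra all_fingroup.
Set Implicit Arguments. Unset Strict Implicit. Unset Printing Implicit Defensive.
Import Order.TTheory GRing.Theory Num.Theory.
Local Open Scope ring_scope.

(* Weights of Sp_{2m}: X = Z^m, coordinates indexed by 'I_m
   (coordinate k : 'I_m is the paper's coordinate k+1). *)
Definition weight (m : nat) := {ffun 'I_m -> int}.

Definition eps (m : nat) (i : 'I_m) : weight m := [ffun k => (k == i)%:Z].

Definition wadd m (x y : weight m) : weight m := [ffun k => x k + y k].
Definition wsub m (x y : weight m) : weight m := [ffun k => x k - y k].
Definition wscale m (c : int) (x : weight m) : weight m := [ffun k => c * x k].

Definition inner m (x y : weight m) : int := \sum_(k < m) x k * y k.

Definition pair_coroot m (x alpha : weight m) : int :=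
  ((2 * inner x alpha) %/ inner alpha alpha)%Z.

Definition rho (m : nat) : weight m := [ffun k : 'I_m => (m - k)%N%:Z].

Definition dominant m (lam : weight m) : Prop :=
  (forall i j : 'I_m, (i <= j)%N -> lam j <= lam i) /\ (forall k, 0 <= lam k).

Definition s_aff m (p : nat) (alpha : weight m) (l : int) (x : weight m) : weight m :=
  wsub x (wscale (pair_coroot x alpha - l * p%:Z) alpha).

Definition dot m (w : weight m -> weight m) (x : weight m) : weight m :=
  wsub (w (wadd x (rho m))) (rho m).

Definition p_core m (p : nat) (lam : weight m) : Prop :=
  dominant lam /\
  forall (i : 'I_m) (l : int), 1 <= l ->
    0 < (wadd lam (rho m)) i - l * p%:Z ->
    exists k : 'I_m, (wadd lam (rho m)) k = (wadd lam (rho m)) i - l * p%:Z.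

(* The Weyl group W = {±1}^m ⋊ S_m acts by
   signed permutations, with sign det(w) = sgn(s) * prod_k e_k.  By the Weyl
   character formula chi(mu) = A(mu+rho)/A(rho) in the group ring Z[X]
   (an integral domain, A(rho) <> 0), where
   A(x) = sum_{w in W} det(w) e^{w x}.  We encode A(x) by its coefficient
   function on X. *)
Definition signed_perm m (s : 'S_m) (e : {ffun 'I_m -> bool}) (x : weight m)
  : weight m := [ffun k => (-1) ^+ e k * x (s k)].

Definition weyl_numerator m (x : weight m) (y : weight m) : int :=
  \sum_(s : 'S_m) \sum_(e : {ffun 'I_m -> bool})
     (if y == signed_perm s e x
      then (-1) ^+ (odd_perm s + #|[set k | e k]|)%N else 0).

Definition weyl_char_zero m (mu : weight m) : Prop :=
  forall y : weight m, weyl_numerator (wadd mu (rho m)) y = 0.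

(* Main.v *)
Require Import Defs.
From mathcomp Require Import all_boot all_order all_algebra all_fingroup.
From mathcomp Require Import zify.
Import Order.TTheory GRing.Theory Num.Theory.
Local Open Scope ring_scope.

Lemma weyl_zero_eq m (v : weight m) (j k : 'I_m) : j != k -> v j = v k ->
  forall z, weyl_numerator v z = 0.
Proof.
move=> njk vjk z; rewrite /weyl_numerator.
pose F := fun s : 'S_m => \sum_(e : {ffun 'I_m -> bool})
     (if z == signed_perm s e v
      then (-1) ^+ (odd_perm s + #|[set k | e k]|)%N else 0 : int).
rewrite -/(\sum_s F s).
have HF : forall s, F (s * tperm j k)%g = - F s.
  move=> s; rewrite /F -sumrN; apply: eq_bigr => e _.
  have -> : signed_perm (s * tperm j k)%g e v = signed_perm s e v.
    apply/ffunP => r; rewrite !ffunE permM; congr (_ * _).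
    case: (tpermP j k (s r)) => [->|->|]; [by rewrite -vjk|by []|by []].
  case: ifP => _; last by rewrite oppr0.
  by rewrite odd_permM odd_tperm njk exprD signr_addb expr1 mulrN1 exprD mulNr.
have : \sum_s F s = \sum_s F (s * tperm j k)%g.
  by rewrite (reindex_inj (mulIg (tperm j k))).
rewrite (eq_bigr _ (fun s _ => HF s)) sumrN => /eqP.
rewrite -subr_eq0 opprK -mulr2n mulrn_eq0 /= => /eqP.
by [].
Qed.

Lemma sum_delta m (f : 'I_m -> int) (i : 'I_m) :
  \sum_(k < m) f k * (k == i)%:Z = f i.
Proof.
rewrite (bigD1 i) //= eqxx mulr1 big1 ?addr0 // => k /negbTE ->.
by rewrite mulr0.
Qed.

Theorem lemma2p1 (p m : nat) (hp : prime p) (hp2 : (2 < p)%N) (hm : (1 <= m)%N)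
  (lam : weight m) (hcore : p_core p lam)
  (i j : 'I_m) (hij : (i < j)%N) (a l : int) (ha : 0 < a) (hl : 0 < l)
  (hpair : pair_coroot (wadd lam (rho m)) (wsub (eps i) (eps j)) = a + l * p%:Z) :
  weyl_char_zero (dot (s_aff p (wsub (eps i) (eps j)) l) lam).
Proof.
set x := wadd lam (rho m) in hcore hpair *.
set al := wsub (eps i) (eps j) in hpair *.
have nij : i != j by rewrite neq_ltn hij.
have alE : forall k, al k = (k == i)%:Z - (k == j)%:Z by move=> k; rewrite !ffunE.
have inner_x : forall v : weight m, inner v al = v i - v j.
  move=> v; rewrite /inner (eq_bigr (fun k => v k * (k == i)%:Z - v k * (k == j)%:Z)).
    by rewrite sumrB !sum_delta.
  by move=> k _; rewrite alE mulrBr.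
have hd : x i - x j = a + l * p%:Z.
  move: hpair; rewrite /pair_coroot !inner_x !alE eqxx (negbTE nij) eq_sym (negbTE nij).
  rewrite subr0 sub0r opprK eqxx => <-; rewrite mulKz //.
have yE : forall k, wadd (dot (s_aff p al l) lam) (rho m) k = x k - a * al k.
  move=> k; rewrite !ffunE /= -/x hpair.
  have -> : a + l * p%:Z - l * p%:Z = a by rewrite addrK.
  by rewrite subrK.
have xj : 1 <= x j.
  rewrite /x !ffunE; case: hcore => [[_ hnn] _].
  have h1 : (0 <= lam j)%R := hnn j.
  have := ltn_ord j; move: h1; move: (lam j) (nat_of_ord j) => u n hu hn.
  suff : (1 <= u + (m - n)%N)%R by [].
  lia.
have ha' : (0 < a)%R := ha.
have hl' : (0 < l)%R := hl.
have hp0 : (0 < p)%N by apply: prime_gt0.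
have xj' : (1 <= x j)%R := xj.
clear ha hl xj.
case: hcore => _ /(_ i l) [].
- suff : (1 <= l)%R by []. lia.
- suff : (0 < x i - l * p%:Z)%R by []. lia.
move=> k hk; rewrite -/x in hk.
have nki : k != i.
  apply/negP => /eqP ki; move: hk; rewrite ki => hk.
  lia.
have nkj : k != j.
  apply/negP => /eqP kj; move: hk; rewrite kj => hk; lia.
apply: (@weyl_zero_eq _ _ j k); first by rewrite eq_sym.
rewrite !yE !alE eqxx (negbTE nki) (negbTE nkj) eq_sym (negbTE nij) hk.
lia.
Qed.
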